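(* There is an absolute constant $C$ such that for every graph $G$ with a proper vertex coloring $c:V\to[q]$, the threshold graph $G'$ constructed from $(G,q)$ as described in the context has treewidth at most $Cq^2$ (i.e., $G'$ has treewidth $O(q^2)$).
   Context: Construction of $G'$: let $G=(V,E)$, $n=|V|$, $m=|E|$, $V_c$ the nodes of color $c$ and, for distinct $c,d$, $E_{cd}$ the edges between $V_c$ and $V_d$. A parallel-paths gadget of size $h$ between nodes $x,y$ consists of $h$ new ''connection'' nodes, each adjacent exactly to $x$ and $y$. For each $c\in[q]$ add a node $x_v$ for each $v\in V_c$ and a guard node $g_c$ adjacent to all these $x_v$. For each unordered pair $\{c,d\}$ of distinct colors add a node $x_{u,v}$ for each edge $(u,v)\in E_{cd}$ and a guard node $g_{cd}$ adjacent to all of them. Assign to each $v\in V$ a distinct $low(v)\in[n]$ and set $high(v)=2n-low(v)$. For each unordered pair $\{c,d\}$ and each of its two colors, say $c$, add two validation nodes $\alpha,\beta$: $\alpha$ is joined to each $x_v$ ($v\in V_c$) by a parallel-paths gadget of size $high(v)$ and to each $x_{u,v}$ with $(u,v)\in E_{cd}$, $v\in V_c$, by a parallel-paths gadget of size $low(v)$; $\beta$ is joined to each such $x_v$ by size $low(v)$ and to each such $x_{u,v}$ by size $high(v)$ (symmetrically for color $d$). Finally add a set $B$ of $(n-q)(2nq-2n+1)+\left(m-\binom q2\right)(4n+1)$ independent nodes, each adjacent to every guard node. (Thresholds are irrelevant for treewidth.) *)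

(* Defs.v *)
From HB Require Import structures.
From mathcomp Require Import all_boot.
Set Implicit Arguments. Unset Strict Implicit. Unset Printing Implicit Defensive.

Definition simple_graph (V : finType) (e : rel V) : Prop :=
  symmetric e /\ irreflexive e.

Definition proper_coloring (V : finType) (e : rel V) (q : nat) (c : V -> 'I_q) : Prop :=
  forall u v, e u v -> c u != c v.

Definition acyclic (T : finType) (t : rel T) : Prop :=
  forall s : seq T, uniq s -> 3 <= size s -> ~~ cycle t s.

Definition is_tree (T : finType) (t : rel T) : Prop :=
  [/\ 0 < #|T|, symmetric t, irreflexive t,
      (forall x y, connect t x y) & acyclic t].

Definition restrict_rel (T : finType) (t : rel T) (A : {set T}) : rel T :=
  [rel x y | [&& t x y, x \in A & y \in A]].

Definition tree_decomposition (V : finType) (g : rel V)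
    (T : finType) (t : rel T) (B : T -> {set V}) : Prop :=
  [/\ is_tree t,
      (forall v, exists x, v \in B x),
      (forall u v, g u v -> exists x, (u \in B x) && (v \in B x)) &
      (forall v, let Tv := [set x | v \in B x] in
         forall x y, x \in Tv -> y \in Tv -> connect (restrict_rel t Tv) x y)].

Definition treewidth_le (V : finType) (g : rel V) (k : nat) : Prop :=
  exists (T : finType) (t : rel T) (B : T -> {set V}),
    tree_decomposition g t B /\ forall x, #|B x| <= k.+1.

(* N bounds gadget indices, K = |B|.
   AB P col b : validation node for the colour pair P and its colour col;
                b = false is alpha, b = true is beta.
   CV P col b v i : i-th connection node of the gadget between AB P col b and x_v.
   CE P col b s v i : i-th connection node of the gadget between AB P col b and
                x_s (s = {u,v} an edge, v its endpoint of colour col). *)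
Inductive node (V : finType) (q N K : nat) :=
| XV of V
| Gc of 'I_q
| XE of {set V}
| Gcd of {set 'I_q}
| AB of {set 'I_q} & 'I_q & bool
| CV of {set 'I_q} & 'I_q & bool & V & 'I_N
| CE of {set 'I_q} & 'I_q & bool & {set V} & V & 'I_N
| Bn of 'I_K.

Section NodeFin.
Variables (V : finType) (q N K : nat).
Local Notation nd := (node V q N K).
Local Notation enc_t := (V + ('I_q + ({set V} + ({set 'I_q} +
  ({set 'I_q} * 'I_q * bool + ({set 'I_q} * 'I_q * bool * V * 'I_N +
  ({set 'I_q} * 'I_q * bool * {set V} * V * 'I_N + 'I_K)))))))%type.

Definition node_enc (x : nd) : enc_t :=
  match x with
  | XV v => inl v
  | Gc a => inr (inl a)
  | XE s => inr (inr (inl s))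
  | Gcd P => inr (inr (inr (inl P)))
  | AB P a b => inr (inr (inr (inr (inl (P, a, b)))))
  | CV P a b v i => inr (inr (inr (inr (inr (inl (P, a, b, v, i))))))
  | CE P a b s v i => inr (inr (inr (inr (inr (inr (inl (P, a, b, s, v, i)))))))
  | Bn i => inr (inr (inr (inr (inr (inr (inr i))))))
  end.

Definition node_dec (y : enc_t) : nd :=
  match y with
  | inl v => XV _ _ _ v
  | inr (inl a) => Gc _ _ _ a
  | inr (inr (inl s)) => XE _ _ _ s
  | inr (inr (inr (inl P))) => Gcd _ _ _ P
  | inr (inr (inr (inr (inl (P, a, b))))) => AB _ _ _ P a b
  | inr (inr (inr (inr (inr (inl (P, a, b, v, i)))))) => CV _ P a b v i
  | inr (inr (inr (inr (inr (inr (inl (P, a, b, s, v, i))))))) => CE _ P a b s v i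
  | inr (inr (inr (inr (inr (inr (inr i)))))) => Bn _ _ _ i
  end.

Lemma node_encK : cancel node_enc node_dec.
Proof. by case. Qed.

HB.instance Definition _ := Finite.copy nd (can_type node_encK).
End NodeFin.

Section Construction.
Variables (V : finType) (e : rel V) (q : nat) (c : V -> 'I_q) (low : V -> nat).

Definition n := #|V|.
Definition is_edge (s : {set V}) : bool :=
  [exists u, exists v, e u v && (s == [set u; v])].
Definition m := #|[set s : {set V} | is_edge s]|.
Definition high (v : V) : nat := 2 * n - low v.

(* |B| = (n-q)(2nq-2n+1) + (m - binom(q,2))(4n+1)  (truncated subtraction) *)
Definition Bsize : nat :=
  (n - q) * (2 * n * q - 2 * n + 1) + (m - 'C(q, 2)) * (4 * n + 1).

Definition Nb := (2 * n).+1.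
Definition rnode := node V q Nb Bsize.

Definition is_pair (P : {set 'I_q}) : bool := #|P| == 2.
Definition edge_in (P : {set 'I_q}) (s : {set V}) : bool :=
  is_edge s && (c @: s == P).

(* gadget size between AB P col b and x_v / x_s (with endpoint v of colour col) *)
Definition size_V (b : bool) (v : V) : nat := if b then low v else high v.
Definition size_E (b : bool) (v : V) : nat := if b then high v else low v.

Definition valid (x : rnode) : bool :=
  match x with
  | XV _ => true
  | Gc _ => true
  | XE s => is_edge s
  | Gcd P => is_pair P
  | AB P a _ => is_pair P && (a \in P)
  | CV P a b v i => [&& is_pair P, a \in P, c v == a & i < size_V b v]
  | CE P a b s v i =>
      [&& is_pair P, a \in P, edge_in P s, v \in s, c v == a & i < size_E b v]
  | Bn _ => true
  end.

Definition adj0 (x y : rnode) : bool :=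
  match x, y with
  | XV v, Gc a => c v == a
  | XE s, Gcd P => c @: s == P
  | CV P a b v _, XV w => v == w
  | CV P a b _ _, AB P' a' b' => [&& P == P', a == a' & b == b']
  | CE P a b s _ _, XE s' => s == s'
  | CE P a b _ _ _, AB P' a' b' => [&& P == P', a == a' & b == b']
  | Bn _, Gc _ => true
  | Bn _, Gcd _ => true
  | _, _ => false
  end.

Definition Gp_vertex := {x : rnode | valid x}.
Definition Gp_adj : rel Gp_vertex :=
  fun x y => adj0 (val x) (val y) || adj0 (val y) (val x).

End Construction.

(* Main.v *)
Require Import Defs.
From HB Require Import structures.
From mathcomp Require Import all_boot.
From mathcomp Require Import zify.
From Stdlib Require Import Lia.
Set Implicit Arguments. Unset Strict Implicit. Unset Printing Implicit Defensive.

Definition prel (T : finType) (par : T -> T) : rel T :=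
  fun a b => (a != b) && ((par a == b) || (par b == a)).

Lemma prel_acyclic (T : finType) (par : T -> T) (d : T -> nat) :
  (forall a, par a != a -> d (par a) < d a) -> acyclic (prel par).
Proof.
move=> hd s us s3; apply/negP => cs.
have [x xs xmax]: exists2 x, x \in s & forall y, y \in s -> d y <= d x.
  case: s us s3 cs => [|a s'] // _ _ _.
  by case: (@arg_maxnP _ a (mem (a :: s')) d (mem_head _ _)) => x xs xm; exists x.
have := rot_index xs; set p := (drop _ _ ++ _) => er.
have ur : uniq (x :: p) by rewrite -er rot_uniq.
have sr : 3 <= size (x :: p) by rewrite -er size_rot.
have cr : cycle (prel par) (x :: p) by rewrite -er rot_cycle.
have mr : forall y, y \in x :: p -> y \in s by move=> y; rewrite -er mem_rot.
clearbody p; clear er; move: ur sr cr mr; case: p => [|y [|z r]] // ur _ cr mr.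
have hxy : prel par x y by move: cr => /= /andP [].
have hwx : prel par (last z r) x by move: cr => /= /and3P [_ _]; rewrite rcons_path => /andP [].
have key : forall w, w \in x :: y :: z :: r -> prel par x w || prel par w x -> par x = w.
  move=> w ws /orP [] /andP [nxw /orP [] /eqP pw] //.
  - have := hd w; rewrite pw nxw => /(_ isT) lt.
    by have := xmax w (mr w ws); rewrite leqNgt lt.
  - have := hd w; rewrite pw eq_sym nxw => /(_ isT) lt.
    by have := xmax w (mr w ws); rewrite leqNgt lt.
have e1 : par x = y.
  apply: key; first by rewrite !inE eqxx orbT.
  by rewrite hxy.
have hl : last z r \in x :: y :: z :: r.
  by rewrite inE; apply/orP; right; rewrite inE; apply/orP; right; apply: mem_last.
have e2 : par x = last z r by apply: key => //; rewrite hwx orbT.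
move: ur; rewrite /= => /andP [_ /andP [ny _]].
by move: ny; rewrite -e1 e2 mem_last.
Qed.

Definition hubn (V : finType) (q N K : nat) (x : node V q N K) : bool :=
  match x with Gc _ | Gcd _ | AB _ _ _ => true | _ => false end.

Definition hub (V : finType) (e : rel V) (q : nat) (c : V -> 'I_q) (low : V -> nat)
  (x : Gp_vertex e c low) : bool := hubn (val x).

Definition center (V : finType) (e : rel V) (q : nat) (c : V -> 'I_q) (low : V -> nat)
  (x : Gp_vertex e c low) : Gp_vertex e c low :=
  match val x with
  | CV _ _ _ v _ => insubd x (XV _ _ _ v)
  | CE _ _ _ s _ _ => insubd x (XE _ _ _ s)
  | _ => x
  end.

Lemma hub_center (V : finType) (e : rel V) (q : nat) (c : V -> 'I_q) (low : V -> nat)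
  (x : Gp_vertex e c low) : hub x -> center x = x.
Proof. by case: x => [[]]. Qed.

Lemma center_idem (V : finType) (e : rel V) (q : nat) (c : V -> 'I_q) (low : V -> nat)
  (x : Gp_vertex e c low) : center (center x) = center x.
Proof.
case: x => [[v|a|s|P|P a b|P a b v i|P a b s v i|i] vx] //=.
- have h : val (center (exist _ (CV _ P a b v i) vx)) = XV _ _ _ v.
    by rewrite /center /= insubdK.
  by rewrite {1}/center h.
- have h : val (center (exist _ (CE _ P a b s v i) vx)) = XE _ _ _ s.
    rewrite /center /= insubdK //.
    by move: vx => /= /and5P [_ _ /andP [he _] _ _].
  by rewrite {1}/center h.
Qed.

Lemma adj_cases (V : finType) (e : rel V) (q : nat) (c : V -> 'I_q) (low : V -> nat)
  (x y : Gp_vertex e c low) :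
  Gp_adj x y -> [|| hub x, hub y, center x == y | center y == x].
Proof.
case: x => [[v|a|s|P|P a b|P a b v i|P a b s v i|i] vx];
case: y => [[v'|a'|s'|P'|P' a' b'|P' a' b' v' i'|P' a' b' s' v' i'|i'] vy];
rewrite /Gp_adj /= ?orbF ?orbT //.
all: move=> /eqP eq; subst; apply/eqP/val_inj; rewrite /center /= insubdK //.
Qed.

Definition par (V : finType) (e : rel V) (q : nat) (c : V -> 'I_q) (low : V -> nat)
  (t : option (Gp_vertex e c low)) : option (Gp_vertex e c low) :=
  if t is Some x then (if hub x || (center x == x) then None else Some (center x)) else None.

Definition Hset (V : finType) (e : rel V) (q : nat) (c : V -> 'I_q) (low : V -> nat)
  : {set Gp_vertex e c low} := [set x | hub x].

Definition Bag (V : finType) (e : rel V) (q : nat) (c : V -> 'I_q) (low : V -> nat)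
  (t : option (Gp_vertex e c low)) : {set Gp_vertex e c low} :=
  if t is Some x then Hset e c low :|: [set x; center x] else Hset e c low.

Lemma par_par (V : finType) (e : rel V) (q : nat) (c : V -> 'I_q) (low : V -> nat)
  (t : option (Gp_vertex e c low)) : par (par t) = None.
Proof.
case: t => [x|] //=; case: ifP => //= _.
by rewrite center_idem eqxx orbT.
Qed.

Lemma step_r (T : finType) (p : T -> T) (A : {set T}) t :
  t \in A -> p t \in A -> connect (restrict_rel (prel p) A) t (p t).
Proof.
move=> ha hb; case: (eqVneq t (p t)) => [<-|ne]; first exact: connect0.
by apply: connect1; apply/and3P; split => //; rewrite /prel ne eqxx.
Qed.

Lemma step_p (T : finType) (p : T -> T) t : connect (prel p) t (p t).
Proof.
case: (eqVneq t (p t)) => [<-|ne]; first exact: connect0.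
by apply: connect1; rewrite /= /prel ne eqxx.
Qed.

Lemma restrict_sym (T : finType) (r : rel T) (A : {set T}) :
  symmetric r -> symmetric (restrict_rel r A).
Proof. by move=> hs x y; rewrite /restrict_rel /= hs; case: (r y x); case: (x \in A); case: (y \in A). Qed.

Lemma prel_sym (T : finType) (p : T -> T) : symmetric (prel p).
Proof. by move=> a b; rewrite /prel eq_sym orbC. Qed.

Lemma td (V : finType) (e : rel V) (q : nat) (c : V -> 'I_q) (low : V -> nat) :
  tree_decomposition (@Gp_adj V e q c low) (prel (@par V e q c low)) (@Bag V e q c low).
Proof.
split.
- split.
  + by rewrite card_option.
  + exact: prel_sym.
  + by move=> a; rewrite /prel eqxx.
  + have toR : forall t, connect (prel (@par V e q c low)) t None.
      move=> t; apply: connect_trans (step_p _ t) _.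
      by rewrite -(par_par t); apply: step_p.
    move=> x y; apply: connect_trans (toR x) _.
    by rewrite (sym_connect_sym (@prel_sym _ _)); apply: toR.
  + apply: (@prel_acyclic _ _ (fun t => if t is Some x then
              (if par t == None then 1 else 2) else 0)) => [[x|]] //=.
    case: ifP => //= _ _; by rewrite center_idem eqxx orbT.
- by move=> v; exists (Some v); rewrite /Bag !inE eqxx orbT.
- move=> u w /adj_cases /or4P [hu|hw|/eqP hc|/eqP hc].
  + by exists (Some w); rewrite /Bag !inE hu eqxx /= orbT.
  + by exists (Some u); rewrite /Bag !inE hw eqxx /= orbT.
  + by exists (Some u); rewrite /Bag !inE hc !eqxx /= !orbT.
  + by exists (Some w); rewrite /Bag !inE hc !eqxx /= !orbT.
- move=> v Tv.
  set R := restrict_rel _ _.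
  have symR : connect_sym R by apply: sym_connect_sym; apply: restrict_sym; exact: prel_sym.
  suff [r0 hr0] : exists r0, forall x, x \in Tv -> connect R x r0.
    by move=> x y hx hy; apply: connect_trans (hr0 x hx) _; rewrite symR; apply: hr0.
  case hv: (hub v).
  + have allT : forall t, t \in Tv.
      by move=> [x|]; rewrite /Tv inE /Bag ?inE hv.
    exists None => t _; apply: connect_trans (step_r (allT t) (allT _)) _.
    by rewrite -(par_par t); apply: step_r.
  + exists (Some v) => [[x|]]; rewrite /Tv inE /Bag ?inE hv //= => /orP [/eqP ->|/eqP hc].
      exact: connect0.
    case: (eqVneq x v) => [->|nxv]; first exact: connect0.
    have hx : hub x = false.
      by apply/negP => /hub_center hx; move: nxv; rewrite -hx -hc eqxx.
    have hp : par (Some x) = Some v.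
      by rewrite /= hx -hc eq_sym (negbTE nxv).
    rewrite -hp; apply: step_r; rewrite /Tv inE /Bag ?inE ?hp /= ?hc ?eqxx ?orbT //.
    by rewrite !inE eqxx orbT.
Qed.

Definition gen (V : finType) (e : rel V) (q : nat) (c : V -> 'I_q) (low : V -> nat)
  (d : 'I_q * 'I_q * 'I_3 * bool) : option (Gp_vertex e c low) :=
  let: (a, b, k, bt) := d in
  match val k with
  | 0 => insub (@Gc V q (Nb V) (Bsize e q) a)
  | 1 => insub (@Gcd V q (Nb V) (Bsize e q) [set a; b])
  | _ => insub (@AB V q (Nb V) (Bsize e q) [set a; b] a bt)
  end.

Lemma hub_gen (V : finType) (e : rel V) (q : nat) (c : V -> 'I_q) (low : V -> nat)
  (x : Gp_vertex e c low) : hub x -> Some x \in codom (@gen V e q c low).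
Proof.
move=> hx; apply/codomP.
case: x hx => [[v|a|s|P|P a b|P a b v i|P a b s v i|i] vx] //= _.
- by exists (a, a, @Ordinal 3 0 isT, false); rewrite /= (insubT _ vx).
- case/cards2P: (vx) => a [b [_ eP]]; subst P.
  by exists (a, b, @Ordinal 3 1 isT, false); rewrite /= (insubT _ vx).
- case/andP: (vx) => /cards2P [x1 [x2 [_ eP]]] ha; subst P.
  case/set2P: ha => ha; subst a.
  + by exists (x1, x2, @Ordinal 3 2 isT, b); rewrite /= (insubT _ vx).
  + exists (x2, x1, @Ordinal 3 2 isT, b).
    have e21 : [set x2; x1] = [set x1; x2] := setUC _ _.
    by rewrite /= e21 (insubT _ vx).
Qed.

Lemma hub_card (V : finType) (e : rel V) (q : nat) (c : V -> 'I_q) (low : V -> nat) :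
  #|Hset e c low| <= 6 * q ^ 2.
Proof.
have -> : 6 * q ^ 2 = size (codom (@gen V e q c low)).
  rewrite size_codom !card_prod !card_ord card_bool; lia.
apply: leq_trans (card_size _).
rewrite -(card_imset _ (@Some_inj _)).
apply: subset_leq_card; apply/subsetP => y /imsetP [x].
by rewrite inE => /hub_gen hx ->.
Qed.

Lemma empty0 (V : finType) (e : rel V) (c : V -> 'I_0) (low : V -> nat)
  (x : Gp_vertex e c low) : False.
Proof.
have nV : forall v : V, False by move=> v; case: (c v).
have n0 : n V = 0 by apply: eq_card0 => v; case: (nV v).
have m0 : m e = 0.
  apply: eq_card0 => s; rewrite !inE /is_edge; apply/negbTE/existsP => -[u _]; exact: nV u.
case: x => [[v|a|s|P|P a b|P a b v i|P a b s v i|i] vx]; try by case: (nV v).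
- by case: (a).
- by move: vx => /= /existsP [u _]; case: (nV u).
- move: vx => /=; rewrite /is_pair.
  by have := max_card (mem P); rewrite card_ord leqn0 => /eqP ->.
- by case: (a).
- by case: (i) => k; rewrite /Bsize n0 m0.
Qed.

Theorem lemma3 :
  exists C : nat,
    forall (V : finType) (e : rel V) (q : nat) (c : V -> 'I_q) (low : V -> nat),
      simple_graph e ->
      proper_coloring e c ->
      injective low ->
      (forall v, 1 <= low v <= #|V|) ->
      treewidth_le (@Gp_adj V e q c low) (C * q ^ 2).
Proof.
exists 7 => V e q c low _ _ _ _.
exists (option (Gp_vertex e c low)), (prel (@par V e q c low)), (@Bag V e q c low).
split; first exact: td.
move=> t; case: q c low t => [|q] c low t.
  apply: leq_trans (max_card _) _.
  rewrite (_ : (7 * 0 ^ 2).+1 = 1) //; apply: leq_trans (leq0n 1); rewrite leqn0; apply/eqP/eq_card0 => x; case: (empty0 x).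
have hc := hub_card e c low.
have h1 : #|Bag t| <= #|Hset e c low| + 2.
  case: t => [x|] /=; last exact: leq_addr.
  apply: leq_trans (leq_card_setU _ _) _.
  by rewrite leq_add2l cards2; case: (_ != _).
apply: leq_trans h1 _; lia.
Qed.
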